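(* Let $\mathcal T_p$ be a cluster tree of depth $p$ for $n$ and let $A\in\mathbb C^{n\times n}$ be an $\epsilon$-$(\mathcal T_p,k)$-HSS matrix. Then there exists $\delta A\in\mathbb C^{n\times n}$ with $\|\delta A\|_2\le\sqrt{2^{p+2}-4}\,\epsilon$ such that $A+\delta A$ is a $(\mathcal T_p,k)$-HSS matrix.
   Context: Cluster tree associated with a partition $n=n_1+\dots+n_{2^p}$ into positive integers: the leaves $I^p_1,\dots,I^p_{2^p}$ are the consecutive index intervals of $I=\{1,\dots,n\}$ of sizes $n_1,\dots,n_{2^p}$ in order, and $I^\ell_i:=I^{\ell+1}_{2i-1}\cup I^{\ell+1}_{2i}$ for $\ell<p$, $i=1,\dots,2^\ell$. For $\ell=1,\dots,p$ and $i=1,\dots,2^\ell$, $A(I^\ell_i,I\setminus I^\ell_i)$ is an HSS block row and $A(I\setminus I^\ell_i,I^\ell_i)$ an HSS block column. $A$ is a $(\mathcal T_p,k)$-HSS matrix if every HSS block row and column has rank at most $k$, and an $\epsilon$-$(\mathcal T_p,k)$-HSS matrix if every HSS block row and column $Y$ admits a matrix $Z$ of rank at most $k$ with $\|Y-Z\|_2\le\epsilon$ (spectral norm). For $p=0$ there are no HSS block rows or columns. *)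

(* Defs.v *)
From HB Require Import structures.
From mathcomp Require Import all_boot all_order all_algebra.
Set Implicit Arguments. Unset Strict Implicit. Unset Printing Implicit Defensive.
Import Order.TTheory GRing.Theory Num.Theory.
Local Open Scope ring_scope.

(* A partition n = n_1 + ... + n_(2^p) into positive integers, given as the
   sequence s = [:: n_1; ...; n_(2^p)]. *)
Definition cluster_partition (n p : nat) (s : seq nat) : Prop :=
  [/\ size s = (2 ^ p)%N, all (fun m => 0 < m)%N s & sumn s = n].

Definition leaf_offset (s : seq nat) (m : nat) : nat := sumn (take m s).

(* Cluster I^l_i (0-based i < 2^l, 0-based indices 0..n-1): the union of the
   leaves i*2^(p-l), ..., (i+1)*2^(p-l)-1, i.e. a consecutive index interval. *)
Definition cluster (n p : nat) (s : seq nat) (l i : nat) : {set 'I_n} :=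
  [set x : 'I_n | (leaf_offset s (i * 2 ^ (p - l)) <= x)%N
                  && (x < leaf_offset s (i.+1 * 2 ^ (p - l)))%N].

Definition block_row (C : Type) (n : nat) (A : 'M[C]_n) (S : {set 'I_n})
  : 'M[C]_(#|S|, #|~: S|) :=
  \matrix_(i < #|S|, j < #|~: S|) A (enum_val i) (enum_val j).

Definition block_col (C : Type) (n : nat) (A : 'M[C]_n) (S : {set 'I_n})
  : 'M[C]_(#|~: S|, #|S|) :=
  \matrix_(i < #|~: S|, j < #|S|) A (enum_val i) (enum_val j).

(* ||Y||_2 <= c  (spectral norm = operator norm induced by the Euclidean norm),
   written out: c >= 0 and ||Y x||_2^2 <= c^2 ||x||_2^2 for all x. *)
Definition spec_norm_le (C : numClosedFieldType) (m q : nat)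
  (Y : 'M[C]_(m, q)) (c : C) : Prop :=
  0 <= c /\ forall x : 'cV[C]_q,
    \sum_(i < m) `|(Y *m x) i 0| ^+ 2 <= c ^+ 2 * \sum_(j < q) `|x j 0| ^+ 2.

Definition eps_rank_le (C : numClosedFieldType) (m q : nat)
  (Y : 'M[C]_(m, q)) (k : nat) (eps : C) : Prop :=
  exists Z : 'M[C]_(m, q), (\rank Z <= k)%N /\ spec_norm_le (Y - Z) eps.

Definition is_HSS (C : numClosedFieldType) (n p : nat) (s : seq nat) (k : nat)
  (A : 'M[C]_n) : Prop :=
  forall l i : nat, (1 <= l <= p)%N -> (i < 2 ^ l)%N ->
    (\rank (block_row A (cluster n p s l i)) <= k)%N /\
    (\rank (block_col A (cluster n p s l i)) <= k)%N.

Definition is_eps_HSS (C : numClosedFieldType) (n p : nat) (s : seq nat) (k : nat)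
  (eps : C) (A : 'M[C]_n) : Prop :=
  forall l i : nat, (1 <= l <= p)%N -> (i < 2 ^ l)%N ->
    eps_rank_le (block_row A (cluster n p s l i)) k eps /\
    eps_rank_le (block_col A (cluster n p s l i)) k eps.

(* Main.v *)
Require Import Defs.
From HB Require Import structures.
From mathcomp Require Import all_boot all_order all_algebra.
From mathcomp Require Import ring zify.
Set Implicit Arguments. Unset Strict Implicit. Unset Printing Implicit Defensive.
Import Order.TTheory GRing.Theory Num.Theory.
Local Open Scope ring_scope.
Local Open Scope sesquilinear_scope.

Section Norms.
Variable C : numClosedFieldType.

Definition dn m (x : 'cV[C]_m) : C := dotmx x^T x^T.

Lemma dot_cv m (a b : 'cV[C]_m) : dotmx a^T b^T = (b^t* *m a) 0 0.
Proof.
rewrite dotmxE !mxE; apply: eq_bigr => i _; by rewrite !mxE mulrC.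
Qed.

Lemma dnE m (x : 'cV[C]_m) : dn x = \sum_i `|x i 0| ^+ 2.
Proof.
rewrite /dn dot_cv mxE; apply: eq_bigr => i _; by rewrite !mxE normCKC.
Qed.

Lemma dn_ge0 m (x : 'cV[C]_m) : 0 <= dn x.
Proof. exact: dnorm_ge0. Qed.

Lemma hcM m q r (M : 'M[C]_(m, q)) (N : 'M[C]_(q, r)) :
  (M *m N)^t* = N^t* *m M^t*.
Proof. by rewrite trmx_mul map_mxM. Qed.

Lemma hcD m q (M N : 'M[C]_(m, q)) : (M + N)^t* = M^t* + N^t*.
Proof. by rewrite linearD /= map_mxD. Qed.

Lemma hcN m q (M : 'M[C]_(m, q)) : (- M)^t* = - M^t*.
Proof. by rewrite linearN /= map_mxN. Qed.

Lemma hcB m q (M N : 'M[C]_(m, q)) : (M - N)^t* = M^t* - N^t*.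
Proof. by rewrite hcD hcN. Qed.

Lemma hcK m q (M : 'M[C]_(m, q)) : M^t*^t* = M.
Proof. by apply/matrixP => i j; rewrite !mxE conjCK. Qed.

Lemma hc1 m : (1%:M : 'M[C]_m)^t* = 1%:M.
Proof. by apply/matrixP => i j; rewrite !mxE eq_sym; case: (_ == _); rewrite ?conjC1 ?conjC0. Qed.

Definition oproj m (P : 'M[C]_m) := P^t* = P /\ P *m P = P.

Lemma oprojC m (P : 'M[C]_m) : oproj P -> oproj (1%:M - P).
Proof.
case=> h1 h2; split; first by rewrite hcB hc1 h1.
by rewrite mulmxBl mul1mx mulmxBr mulmx1 h2 subrr subr0.
Qed.

Lemma dnD_orth m (P : 'M[C]_m) (u w : 'cV[C]_m) : oproj P ->
  dn ((1%:M - P) *m u + P *m w) = dn ((1%:M - P) *m u) + dn (P *m w).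
Proof.
case=> h1 h2; rewrite /dn linearD /=; apply: hnormDd.
apply: etrans (dot_cv _ _) _.
rewrite hcM h1 !mulmxA -(mulmxA _ P) mulmxBr mulmx1 h2 subrr.
by rewrite mulmx0 mul0mx mxE.
Qed.

Lemma dn_proj m (P : 'M[C]_m) (x : 'cV[C]_m) : oproj P ->
  dn x = dn ((1%:M - P) *m x) + dn (P *m x).
Proof.
move=> hP; rewrite -dnD_orth // mulmxBl mul1mx subrK //.
Qed.

Lemma dn_proj_le m (P : 'M[C]_m) (x : 'cV[C]_m) : oproj P -> dn (P *m x) <= dn x.
Proof. by move=> hP; rewrite (dn_proj x hP) lerDr dn_ge0. Qed.

Lemma dnD_le (m : nat) (u v : 'cV[C]_m) (a b s t : C) :
  0 <= a -> 0 <= b -> 0 <= s -> 0 <= t ->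
  dn u <= a * s -> dn v <= b * t -> dn (u + v) <= (a + b) * (s + t).
Proof.
move=> a0 b0 s0 t0 hu hv.
rewrite /dn linearD /= dnormD /=.
set d := dotmx u^T v^T.
have h1 : d + d^* <= 2%:R * `|d|.
  have := (leif_Re_Creal d).1; rewrite ReE => h.
  by rewrite -(ler_pM2r (x := 2%:R^-1)) ?invr_gt0 ?ltr0n // mulrAC divff ?pnatr_eq0 // mul1r.
have h2 : 2%:R * `|d| <= a * t + b * s.
  rewrite -ler_sqr ?nnegrE ?mulr_ge0 ?addr_ge0 ?mulr_ge0 ?ler0n ?normr_ge0 //.
  have cs := CauchySchwarz (dotmx (n:=m)) u^T v^T; move: cs => /(fun h => h.1) cs.
  apply: (le_trans (y := 4%:R * (a * s * (b * t)))).
    rewrite exprMn (_ : 2%:R ^+ 2 = 4%:R :> C); last by rewrite -natrX.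
    rewrite ler_pM2l ?ltr0n //; apply: le_trans cs _.
    by apply: ler_pM => //; apply: dnorm_ge0.
  rewrite -subr_ge0 (_ : _ - _ = (a * t - b * s) ^+ 2); first by rewrite -realEsqr realB ?ger0_real ?mulr_ge0.
  by ring.
apply: (le_trans (lerD (lerD hu hv) (le_trans h1 h2))).
by rewrite le_eqVlt; apply/orP; left; apply/eqP; ring.
Qed.

End Norms.
Section Bnd.
Variable C : numClosedFieldType.

Definition bnd m q (M : 'M[C]_(m, q)) (c : C) := forall x, dn (M *m x) <= c * dn x.

Lemma dnN m (x : 'cV[C]_m) : dn (- x) = dn x.
Proof. by rewrite !dnE; apply: eq_bigr => i _; rewrite mxE normrN. Qed.

Lemma dn0 m : dn (0 : 'cV[C]_m) = 0.
Proof. by rewrite dnE big1 // => i _; rewrite mxE normr0 expr0n. Qed.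

Lemma dn_eq0 m (x : 'cV[C]_m) : (dn x == 0) = (x == 0).
Proof. by rewrite /dn dnorm_eq0 trmx_eq0. Qed.

Lemma bndN m q (M : 'M[C]_(m, q)) c : bnd M c -> bnd (- M) c.
Proof. by move=> h x; rewrite mulNmx dnN. Qed.

Lemma bnd_le m q (M : 'M[C]_(m, q)) c c' : c <= c' -> bnd M c -> bnd M c'.
Proof. by move=> hc h x; apply: le_trans (h x) _; rewrite ler_wpM2r ?dn_ge0. Qed.

Lemma bndM m q r (M : 'M[C]_(m, q)) (N : 'M[C]_(q, r)) a b :
  0 <= a -> bnd M a -> bnd N b -> bnd (M *m N) (a * b).
Proof.
move=> a0 hM hN x; rewrite -mulmxA; apply: le_trans (hM _) _.
by rewrite -mulrA ler_wpM2l.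
Qed.

Lemma bnd_proj m (P : 'M[C]_m) : oproj P -> bnd P 1.
Proof. by move=> hP x; rewrite mul1r dn_proj_le. Qed.

Lemma dot_hc m q (M : 'M[C]_(m, q)) x y :
  dotmx (M *m x)^T y^T = dotmx x^T (M^t* *m y)^T.
Proof.
by rewrite !dot_cv hcM hcK mulmxA.
Qed.

Lemma bnd_hc m q (M : 'M[C]_(m, q)) c : 0 <= c -> bnd M c -> bnd (M^t*) c.
Proof.
move=> c0 h y; set w := M^t* *m y.
have e1 : dn w = dotmx (M *m w)^T y^T by rewrite dot_hc.
have h1 : dn w ^+ 2 <= c * dn w * dn y.
  have cs := (CauchySchwarz (dotmx (n:=m)) (M *m w)^T y^T).1.
  have -> : dn w ^+ 2 = `|dotmx (M *m w)^T y^T| ^+ 2 by rewrite -e1 ger0_norm ?dn_ge0.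
  apply: le_trans cs _; apply: ler_wpM2r; [exact: dnorm_ge0 | exact: h].
have [w0|wn0] := eqVneq (dn w) 0.
  by rewrite w0 mulr_ge0 ?dn_ge0.
have wp : 0 < dn w by rewrite lt_def wn0 dn_ge0.
by rewrite -(ler_pM2r wp) -expr2 mulrAC.
Qed.

Lemma bnd0 m q c : 0 <= c -> bnd (0 : 'M[C]_(m, q)) c.
Proof. by move=> c0 x; rewrite mul0mx dn0 mulr_ge0 ?dn_ge0. Qed.

End Bnd.

Section Proj.
Variable C : numClosedFieldType.

Definition projof n (Z : 'M[C]_n) : 'M[C]_n :=
  let U := schmidt (row_base Z^T) in U^T *m (U^T)^t*.

Lemma projof_spec n (Z : 'M[C]_n) :
  [/\ oproj (projof Z), \rank (projof Z) <= \rank Z, projof Z *m Z = Z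
    & exists W, projof Z = Z *m W]%N.
Proof.
rewrite /projof; set R := row_base Z^T; set U := schmidt R.
have uU : U \is unitarymx by apply: schmidt_unitarymx; rewrite rank_leq_col.
have eU : (U :=: Z^T)%MS.
  by apply: eqmx_trans (eqmx_schmidt_free (row_base_free _)) (eq_row_base _).
have uU' : (U^T)^t* *m U^T = 1%:M.
  have := unitarymxP uU => /(congr1 trmx); rewrite trmx_mul trmx1 => <-.
  by congr (_ *m _); apply/matrixP => i j; rewrite !mxE.
split.
- split; first by rewrite hcM hcK.
  by rewrite mulmxA -(mulmxA U^T) uU' mulmx1.
- rewrite (leq_trans (mxrankM_maxl _ _)) // mxrank_tr.
  by rewrite eU mxrank_tr.
- have : (Z^T <= U)%MS by rewrite eU.
  case/submxP => D hD.
  have eZ : Z = U^T *m D^T by rewrite -trmx_mul -hD trmxK.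
  transitivity (U^T *m (U^T)^t* *m (U^T *m D^T)); first by rewrite -eZ.
  by rewrite mulmxA -(mulmxA U^T) uU' mulmx1 -eZ.
- have : (U <= Z^T)%MS by rewrite eU.
  case/submxP => D hD.
  exists (D^T *m (U^T)^t*).
  by rewrite hD trmx_mul trmxK mulmxA.
Qed.

End Proj.
Section Sel.
Variable C : numClosedFieldType.
Variable n : nat.
Implicit Types S T : {set 'I_n}.

Definition sel S : 'M[C]_(#|S|, n) := \matrix_(i, x) ((enum_val i == x)%:R).
Definition msk S : 'M[C]_n := diag_mx (\row_x ((x \in S)%:R)).

Lemma sum_delta (F : 'I_n -> C) a : \sum_x (a == x)%:R * F x = F a.
Proof.
rewrite (bigD1 a) //= eqxx mul1r big1 ?addr0 // => x hx.
by rewrite eq_sym (negbTE hx) mul0r.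
Qed.

Lemma selME S q (M : 'M[C]_(n, q)) i y : (sel S *m M) i y = M (enum_val i) y.
Proof. by rewrite mxE -[RHS](sum_delta (fun x => M x y)); apply: eq_bigr => x _; rewrite mxE. Qed.

Lemma MselE S q (M : 'M[C]_(q, n)) x j : (M *m (sel S)^T) x j = M x (enum_val j).
Proof.
rewrite mxE -[RHS](sum_delta (fun y => M x y)); apply: eq_bigr => y _.
by rewrite !mxE mulrC.
Qed.

Lemma mskE S x y : msk S x y = ((x \in S) && (x == y))%:R.
Proof. by rewrite mxE mxE; case: (x \in S); case: (x == y); rewrite ?mulr1n ?mulr0n. Qed.

Lemma hcE m q (M : 'M[C]_(m, q)) i j : (M^t*) i j = (M j i)^*.
Proof. by rewrite !mxE. Qed.

Lemma msk_mul S q (M : 'M[C]_(n, q)) x y : (msk S *m M) x y = (x \in S)%:R * M x y.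
Proof. by rewrite /msk mul_diag_mx !mxE. Qed.

Lemma mul_msk S q (M : 'M[C]_(q, n)) x y : (M *m msk S) x y = M x y * (y \in S)%:R.
Proof. by rewrite /msk mul_mx_diag !mxE. Qed.

Lemma sel_selT S : sel S *m (sel S)^T = 1%:M.
Proof.
apply/matrixP => i j; rewrite selME !mxE.
by rewrite (inj_eq enum_val_inj) eq_sym.
Qed.

Lemma selT_sel S : (sel S)^T *m sel S = msk S.
Proof.
apply/matrixP => x y; rewrite mskE mxE.
have [hx|hx] := boolP (x \in S).
  rewrite (bigD1 (enum_rank_in hx x)) //= !mxE enum_rankK_in // eqxx mul1r.
  rewrite big1 ?addr0 // => i hi; rewrite !mxE.
  have -> : (enum_val i == x) = false.
    apply/negbTE; apply: contra hi => /eqP hix; apply/eqP; apply: enum_val_inj.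
    by rewrite enum_rankK_in.
  by rewrite mul0r.
rewrite big1 // => i _; rewrite !mxE.
have -> : (enum_val i == x) = false.
  by apply/negbTE; apply: contra hx => /eqP <-; apply: enum_valP.
by rewrite mul0r.
Qed.

Lemma sel_msk S : sel S *m msk S = sel S.
Proof. by rewrite -selT_sel mulmxA sel_selT mul1mx. Qed.

Lemma msk_selT S : msk S *m (sel S)^T = (sel S)^T.
Proof. by rewrite -selT_sel -mulmxA sel_selT mulmx1. Qed.

Lemma mskM S T : msk S *m msk T = msk (S :&: T).
Proof.
apply/matrixP => x y; rewrite msk_mul !mskE inE.
by case: (x \in S); case: (x \in T); case: (x == y); rewrite ?mul1r ?mul0r.
Qed.

Lemma msk_hc S : (msk S)^t* = msk S.
Proof.
apply/matrixP => x y; rewrite hcE !mskE.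
have [->|hxy] := eqVneq x y.
  by rewrite andbT; case: (y \in S); rewrite ?conjC1 ?conjC0.
by rewrite !andbF conjC0.
Qed.

Lemma msk_oproj S : oproj (msk S).
Proof. by split; rewrite ?msk_hc // mskM setIid. Qed.

Lemma mskC S : msk (~: S) = 1%:M - msk S.
Proof.
apply/matrixP => x y; rewrite mskE [RHS]mxE [X in _ = _ + X]mxE mskE inE [1%:M x y]mxE.
by case: (x \in S); case: (x == y); rewrite /= ?subrr ?subr0.
Qed.

Lemma msk0 : msk set0 = 0.
Proof. by apply/matrixP => x y; rewrite mskE inE mxE. Qed.

Lemma mskT : msk setT = 1%:M.
Proof. by apply/matrixP => x y; rewrite mskE inE mxE. Qed.

Lemma dn_hc m (x : 'cV[C]_m) : dn x = (x^t* *m x) 0 0.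
Proof. exact: dot_cv. Qed.

Lemma sel_hc S : ((sel S)^T)^t* = sel S.
Proof. by apply/matrixP => i x; rewrite !mxE; case: (_ == _); rewrite ?conjC1 ?conjC0. Qed.

Lemma sel_hcT S : (sel S)^t* = (sel S)^T.
Proof. by apply/matrixP => i x; rewrite !mxE; case: (_ == _); rewrite ?conjC1 ?conjC0. Qed.

Lemma dn_selT S (v : 'cV[C]_#|S|) : dn ((sel S)^T *m v) = dn v.
Proof. by rewrite !dn_hc hcM sel_hc -mulmxA (mulmxA (sel S)) sel_selT mul1mx. Qed.

Lemma dn_sel S (x : 'cV[C]_n) : dn (sel S *m x) <= dn x.
Proof.
have -> : dn (sel S *m x) = dn (msk S *m x).
  rewrite !dn_hc !hcM msk_hc !mulmxA -(mulmxA (x^t*) (msk S) (msk S)) (proj2 (msk_oproj S)).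
  by rewrite sel_hcT -(mulmxA (x^t*) (sel S)^T) selT_sel.
exact: dn_proj_le (msk_oproj S).
Qed.

Definition sub S T (M : 'M[C]_n) : 'M[C]_(#|S|, #|T|) := sel S *m M *m (sel T)^T.

Lemma bnd_selT S T (W : 'M[C]_(#|S|, #|T|)) c : 0 <= c -> bnd W c ->
  bnd ((sel S)^T *m W *m sel T) c.
Proof.
move=> c0 h x; rewrite -!mulmxA dn_selT; apply: le_trans (h _) _.
by rewrite ler_wpM2l // dn_sel.
Qed.

Lemma bnd_sel S T (W : 'M[C]_n) c : 0 <= c -> bnd W c ->
  bnd (sel S *m W *m (sel T)^T) c.
Proof.
move=> c0 h x; rewrite -!mulmxA; apply: le_trans (dn_sel _ _) _.
by apply: le_trans (h _) _; rewrite dn_selT.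
Qed.

End Sel.
Arguments sel {C n} S.
Arguments msk {C n} S.
Arguments sub {C n} S T M.
Section Iface.
Variable C : numClosedFieldType.
Variable n : nat.
Implicit Types S T : {set 'I_n}.

Lemma subE S T (M : 'M[C]_n) i j : sub S T M i j = M (enum_val i) (enum_val j).
Proof. by rewrite /sub MselE selME. Qed.

Lemma block_rowE S (M : 'M[C]_n) : block_row M S = sub S (~: S) M.
Proof. by apply/matrixP => i j; rewrite subE mxE. Qed.

Lemma block_colE S (M : 'M[C]_n) : block_col M S = sub (~: S) S M.
Proof. by apply/matrixP => i j; rewrite subE mxE. Qed.

Lemma sub_msk S T (M : 'M[C]_n) : sub S T M = sub S T (msk S *m M *m msk T).
Proof.
by rewrite /sub !mulmxA sel_msk -!mulmxA msk_selT.
Qed.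

Lemma rank_sub_le S T (M : 'M[C]_n) :
  (\rank (sub S T M) <= \rank (msk S *m M *m msk T))%N.
Proof.
rewrite sub_msk /sub (leq_trans (mxrankM_maxl _ _)) //.
by rewrite (leq_trans (mxrankM_maxr _ _)).
Qed.

Lemma msk_sub S T (M : 'M[C]_n) :
  msk S *m M *m msk T = (sel S)^T *m sub S T M *m sel T.
Proof. by rewrite /sub !mulmxA selT_sel -!mulmxA selT_sel. Qed.

Lemma rank_msk_le S T (M : 'M[C]_n) :
  (\rank (msk S *m M *m msk T) <= \rank (sub S T M))%N.
Proof.
rewrite msk_sub (leq_trans (mxrankM_maxl _ _)) //.
by rewrite (leq_trans (mxrankM_maxr _ _)).
Qed.

Lemma spec_bnd m q (M : 'M[C]_(m, q)) e : spec_norm_le M e <-> 0 <= e /\ bnd M (e ^+ 2).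
Proof.
split=> [[e0 h]|[e0 h]]; split => // x.
  by rewrite !dnE; apply: h.
by rewrite -!dnE; apply: h.
Qed.

Lemma approx_to S T (M : 'M[C]_n) k e : eps_rank_le (sub S T M) k e ->
  0 <= e /\ exists Z, [/\ (\rank Z <= k)%N, msk S *m Z *m msk T = Z
     & bnd (msk S *m M *m msk T - Z) (e ^+ 2)].
Proof.
case=> Z0 [rk /spec_bnd [e0 hb]]; split => //.
exists ((sel S)^T *m Z0 *m sel T); split.
- rewrite (leq_trans (mxrankM_maxl _ _)) //.
  by rewrite (leq_trans (mxrankM_maxr _ _)).
- by rewrite !mulmxA msk_selT -!mulmxA sel_msk.
rewrite msk_sub -mulmxBl -mulmxBr; apply: bnd_selT => //.
by rewrite exprn_ge0.
Qed.

Lemma approx_from S T (M : 'M[C]_n) k e : 0 <= e ->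
  (exists Z, (\rank Z <= k)%N /\ bnd (msk S *m M *m msk T - Z) (e ^+ 2)) ->
  eps_rank_le (sub S T M) k e.
Proof.
move=> e0 [Z [rk hb]]; exists (sel S *m Z *m (sel T)^T); split.
- rewrite (leq_trans (mxrankM_maxl _ _)) //.
  by rewrite (leq_trans (mxrankM_maxr _ _)).
apply/spec_bnd; split => //.
rewrite sub_msk /sub -mulmxBl -mulmxBr; apply: bnd_sel => //.
by rewrite exprn_ge0.
Qed.

End Iface.
Definition fam_eps (C : numClosedFieldType) n (F : {set 'I_n} -> Prop) k (e : C) (A : 'M[C]_n) :=
  forall S, F S -> eps_rank_le (block_row A S) k e /\ eps_rank_le (block_col A S) k e.
Definition fam_rk (C : numClosedFieldType) n (F : {set 'I_n} -> Prop) k (A : 'M[C]_n) :=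
  forall S, F S -> (\rank (block_row A S) <= k)%N /\ (\rank (block_col A S) <= k)%N.

Lemma hc_sum (C : numClosedFieldType) m q N (F : 'I_N -> 'M[C]_(m, q)) :
  (\sum_j F j)^t* = \sum_j (F j)^t*.
Proof.
apply/matrixP => i j; rewrite hcE !summxE rmorph_sum; apply: eq_bigr => l _.
by rewrite hcE.
Qed.

Lemma mkproj (C : numClosedFieldType) n (S : {set 'I_n}) (Y Z : 'M[C]_n) k e2 :
  0 <= e2 -> msk S *m Z = Z -> (\rank Z <= k)%N -> bnd (Y - Z) e2 ->
  exists Pi : 'M[C]_n, [/\ oproj Pi, (\rank Pi <= k)%N, msk S *m Pi = Pi,
     Pi *m msk S = Pi & bnd ((1%:M - Pi) *m Y) e2].
Proof.
move=> e0 hZ rk hb; have [op rkP PZ [W hW]] := projof_spec Z.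
have h1 : msk S *m projof Z = projof Z by rewrite hW mulmxA hZ.
exists (projof Z); split => //.
- exact: leq_trans rkP rk.
- have := congr1 (fun M => M^t*) h1; rewrite hcM msk_hc.
  by case: op => -> _.
have -> : (1%:M - projof Z) *m Y = (1%:M - projof Z) *m (Y - Z).
  by rewrite [in RHS]mulmxBr [X in _ = _ - X]mulmxBl mul1mx PZ subrr subr0.
rewrite -[e2]mul1r; apply: bndM => //.
exact: bnd_proj (oprojC op).
Qed.
Section Step.
Variable C : numClosedFieldType.
Variables (n N : nat) (c : 'I_N -> {set 'I_n}) (lf : 'I_n -> 'I_N).
Variable hlf : forall x j, (x \in c j) = (lf x == j).

Local Notation Mx := 'M[C]_n.

Definition compat (D : {set 'I_n}) := forall x y, lf x = lf y -> (x \in D) = (y \in D).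

Lemma compat_cases D j : compat D -> c j :&: D = c j \/ c j :&: D = set0.
Proof.
move=> hD; have [->|[x hx]] := set_0Vmem (c j :&: D); first by right.
left; apply/setP => y; rewrite inE; apply/andP/idP => [[]//|hy]; split => //.
move: hx; rewrite inE => /andP[hxj hxD].
by rewrite -(hD x y) //; move: hxj hy; rewrite !hlf => /eqP -> /eqP ->.
Qed.

Lemma compatC D : compat D -> compat (~: D).
Proof. by move=> hD x y h; rewrite !inE (hD x y h). Qed.

Lemma compat_leaf j : compat (c j).
Proof. by move=> x y h; rewrite !hlf h. Qed.

Lemma leaf_disj j j' : j != j' -> c j :&: c j' = set0.
Proof.
move=> hj; apply/setP => x; rewrite !inE !hlf.
by apply/negbTE; apply: contra hj => /andP[/eqP <- /eqP <-].
Qed.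

Lemma msk_leaf_disj j j' : j != j' -> msk (c j) *m msk (c j') = 0 :> Mx.
Proof. by move=> hj; rewrite mskM leaf_disj // msk0. Qed.

Lemma msk_leaf_sum : \sum_j msk (c j) = 1%:M :> Mx.
Proof.
apply/matrixP => x y; rewrite summxE (bigD1 (lf x)) //= big1 => [|j hj].
  by rewrite addr0 mskE hlf eqxx /= mxE.
by rewrite mskE hlf eq_sym (negbTE hj).
Qed.

Definition leafproj (Pi : 'I_N -> Mx) :=
  forall j, [/\ oproj (Pi j), msk (c j) *m Pi j = Pi j & Pi j *m msk (c j) = Pi j].

Section LP.
Variable Pi : 'I_N -> Mx.
Variable hPi : leafproj Pi.

Lemma lp_offl j j' : j != j' -> msk (c j) *m Pi j' = 0.
Proof.
by move=> h; have [_ h2 _] := hPi j'; rewrite -h2 mulmxA msk_leaf_disj // mul0mx.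
Qed.

Lemma lp_offr j j' : j != j' -> Pi j' *m msk (c j) = 0.
Proof.
move=> h; have [_ _ h2] := hPi j'; rewrite -h2 -mulmxA msk_leaf_disj 1?eq_sym //.
by rewrite mulmx0.
Qed.

Lemma lp_mskl j : msk (c j) *m (\sum_j Pi j) = Pi j.
Proof.
rewrite mulmx_sumr (bigD1 j) //= big1 => [|j' hj]; last by rewrite lp_offl // eq_sym.
by have [_ -> _] := hPi j; rewrite addr0.
Qed.

Lemma lp_mskr j : (\sum_j Pi j) *m msk (c j) = Pi j.
Proof.
rewrite mulmx_suml (bigD1 j) //= big1 => [|j' hj]; last by rewrite lp_offr // eq_sym.
by have [_ _ ->] := hPi j; rewrite addr0.
Qed.

Lemma lp_oproj : oproj (\sum_j Pi j).
Proof.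
split.
  by rewrite hc_sum; apply: eq_bigr => j _; have [[-> _] _ _] := hPi j.
rewrite mulmx_suml; apply: eq_bigr => j _.
by have [_ _ h] := hPi j; rewrite -{1}h -mulmxA lp_mskl; case: (hPi j) => -[_ ->].
Qed.

Lemma lp_comm D : compat D -> msk D *m (\sum_j Pi j) = (\sum_j Pi j) *m msk D.
Proof.
move=> hD; rewrite mulmx_sumr mulmx_suml; apply: eq_bigr => j _.
have [_ h1 h2] := hPi j.
rewrite -{1}h1 -{2}h2 mulmxA mskM -[RHS]mulmxA mskM setIC.
by case: (compat_cases j hD) => ->; rewrite ?msk0 ?mulmx0 ?mul0mx // h1 h2.
Qed.

End LP.

Definition dg (A : Mx) := \sum_j msk (c j) *m A *m msk (c j).

Lemma dg_kill D E A : compat D -> D :&: E = set0 -> msk D *m dg A *m msk E = 0.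
Proof.
move=> hD hDE; rewrite mulmx_sumr mulmx_suml big1 // => j _.
case: (compat_cases j hD) => h.
  rewrite -!mulmxA mskM (_ : c j :&: E = set0) ?msk0 ?mulmx0 //.
  by rewrite -h -setIA hDE setI0.
by rewrite !mulmxA mskM setIC h msk0 !mul0mx.
Qed.

Lemma dg_leaf j A : msk (c j) *m (A - dg A) = msk (c j) *m A *m msk (~: c j).
Proof.
rewrite mulmxBr /dg mulmx_sumr (bigD1 j) //= big1 => [|j' hj]; last first.
  by rewrite !mulmxA msk_leaf_disj 1?eq_sym // !mul0mx.
rewrite addr0 !mulmxA mskM setIid mskC mulmxBr mulmx1 //.
Qed.

Lemma dg_hc A : (dg A)^t* = dg (A^t*).
Proof. by rewrite /dg hc_sum; apply: eq_bigr => j _; rewrite !hcM msk_hc mulmxA. Qed.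

Lemma dn_part (v : 'cV[C]_n) : dn v = \sum_j dn (msk (c j) *m v).
Proof.
rewrite dn_hc (eq_bigr (fun j => (v^t* *m msk (c j) *m v) 0 0)); last first.
  move=> j _; rewrite dn_hc hcM msk_hc !mulmxA -(mulmxA (v^t*) (msk (c j)) (msk (c j))).
  by case: (msk_oproj C (c j)) => _ ->.
by rewrite -summxE -mulmx_suml -mulmx_sumr msk_leaf_sum mulmx1.
Qed.

Lemma rowsum Pi B e2 : leafproj Pi ->
  (forall j, bnd ((1%:M - Pi j) *m (msk (c j) *m B *m msk (~: c j))) e2) ->
  bnd ((1%:M - \sum_j Pi j) *m (B - dg B)) (N%:R * e2).
Proof.
move=> hP hb x; rewrite dn_part.
rewrite (eq_bigr (fun j => dn ((1%:M - Pi j) *m (msk (c j) *m B *m msk (~: c j)) *m x))); last first.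
  move=> j _; congr dn; rewrite !mulmxA.
  have e1 : msk (c j) *m (1%:M - \sum_j Pi j) = (1%:M - Pi j) *m msk (c j).
    by rewrite mulmxBr mulmx1 lp_mskl // mulmxBl mul1mx; have [_ _ ->] := hP j.
  by rewrite e1 -(mulmxA (1%:M - Pi j) (msk (c j)) (B - dg B)) dg_leaf !mulmxA.
apply: le_trans (ler_sum _ (fun j _ => hb j x)) _.
by rewrite sumr_const card_ord -mulrA mulr_natl.
Qed.


Lemma zid (V : zmodType) (a y u v : V) : a + (u + v) - (y + a) = - (y - u - v).
Proof.
rewrite opprD addrA addrAC [a + _]addrC addrK.
rewrite !opprB addrA [v + u]addrC //.
Qed.

Lemma alg1 (P Q Y D : Mx) : (1%:M - P) *m Y + P *m (Y *m (1%:M - Q) - D *m Q) =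
      Y - P *m Y *m Q - P *m D *m Q.
Proof. by rewrite mulmxBl mul1mx !mulmxBr mulmx1 !mulmxA !addrA subrK. Qed.

Lemma sandw (P Q W : Mx) : oproj P -> oproj Q -> P *m (P *m W *m Q) *m Q = P *m W *m Q.
Proof.
case=> _ hP [_ hQ]; by rewrite !mulmxA hP -!mulmxA hQ.
Qed.

Lemma step (F : {set 'I_n} -> Prop) k e c' (A : Mx) :
  0 <= e -> 0 <= c' ->
  (forall D, F D -> compat D) ->
  (forall A', fam_eps F k e A' -> exists d', bnd d' c' /\ fam_rk F k (A' + d')) ->
  fam_eps F k e A ->
  (forall j, eps_rank_le (block_row A (c j)) k e /\ eps_rank_le (block_col A (c j)) k e) ->
  exists d, [/\ bnd d (N%:R * e^+2 + (N%:R * e^+2 + c')), fam_rk F k (A + d) &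
     forall j, (\rank (block_row (A + d) (c j)) <= k)%N /\ (\rank (block_col (A + d) (c j)) <= k)%N].
Proof.
move=> e0 c0 hF IH hA hL.
have e20 : 0 <= e^+2 := exprn_ge0 2 e0.
have hrow : forall j, exists Pj : Mx, [/\ oproj Pj, (\rank Pj <= k)%N, msk (c j) *m Pj = Pj,
    Pj *m msk (c j) = Pj & bnd ((1%:M - Pj) *m (msk (c j) *m A *m msk (~: c j))) (e^+2)].
  move=> j; case: (hL j) => hr _; move: hr; rewrite block_rowE => /approx_to [_ [Z [rk hZ hb]]].
  apply: (mkproj e20 _ rk hb).
  by rewrite -hZ !mulmxA mskM setIid.
have [Pi hPi] := fin_all_exists hrow.
have hcol : forall j, exists Qj : Mx, [/\ oproj Qj, (\rank Qj <= k)%N, msk (c j) *m Qj = Qj,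
    Qj *m msk (c j) = Qj & bnd ((1%:M - Qj) *m (msk (c j) *m A^t* *m msk (~: c j))) (e^+2)].
  move=> j; case: (hL j) => _ hr; move: hr; rewrite block_colE => /approx_to [_ [Z [rk hZ hb]]].
  apply: (mkproj (Z := Z^t*) e20).
  - by rewrite -hZ !hcM !msk_hc !mulmxA mskM setIid.
  - by rewrite mxrank_map mxrank_tr.
  have -> : msk (c j) *m A^t* *m msk (~: c j) - Z^t* = (msk (~: c j) *m A *m msk (c j) - Z)^t*.
    by rewrite hcB !hcM !msk_hc mulmxA.
  exact: bnd_hc.
have [Qi hQi] := fin_all_exists hcol.
have lpP : leafproj Pi by move=> j; case: (hPi j).
have lpQ : leafproj Qi by move=> j; case: (hQi j).
set P := \sum_j Pi j; set Q := \sum_j Qi j.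
have oP : oproj P := lp_oproj lpP.
have oQ : oproj Q := lp_oproj lpQ.
have cP : forall D, compat D -> msk D *m P = P *m msk D := lp_comm lpP.
have cQ : forall D, compat D -> msk D *m Q = Q *m msk D := lp_comm lpQ.
have hA' : fam_eps F k e (P *m A *m Q).
  have tr : forall E1 E2, compat E1 -> compat E2 -> eps_rank_le (sub E1 E2 A) k e ->
      eps_rank_le (sub E1 E2 (P *m A *m Q)) k e.
    move=> E1 E2 c1 c2 /approx_to [_ [Z [rk _ hb]]]; apply: approx_from => //.
    exists (P *m Z *m Q); split.
      exact: leq_trans (mxrankM_maxl _ _) (leq_trans (mxrankM_maxr _ _) rk).
    have -> : msk E1 *m (P *m A *m Q) *m msk E2 - P *m Z *m Q =
        P *m (msk E1 *m A *m msk E2 - Z) *m Q.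
      by rewrite !mulmxA cP // -!mulmxA -cQ // mulmxBl mulmxBr !mulmxA.
    rewrite -[e^+2]mul1r -[1 * e^+2]mulr1; apply: bndM; [by rewrite mul1r | | exact: bnd_proj].
    by apply: bndM; [exact: ler01 | exact: bnd_proj | exact: hb].
  move=> D hD; have cD := hF D hD; have cD' := compatC cD.
  by case: (hA D hD); rewrite !block_rowE !block_colE => h1 h2; split; apply: tr.
have [d' [hd' hFd']] := IH _ hA'.
pose X := A - dg A + d'.
exists (dg A + P *m X *m Q - A).
have eF : A + (dg A + P *m X *m Q - A) = dg A + P *m X *m Q by rewrite addrC subrK.
have gen : forall E1 E2, compat E1 -> compat E2 -> E1 :&: E2 = set0 ->
    (\rank (msk E1 *m (dg A + P *m X *m Q) *m msk E2) <=
     \rank (msk E1 *m (P *m A *m Q + d') *m msk E2))%N.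
  move=> E1 E2 c1 c2 h12.
  rewrite [in X in (\rank X <= _)%N]mulmxDr [in X in (\rank X <= _)%N]mulmxDl dg_kill // add0r.
  have com : forall Y, msk E1 *m (P *m Y *m Q) *m msk E2 = P *m (msk E1 *m Y *m msk E2) *m Q.
    by move=> Y; rewrite !mulmxA cP // -!mulmxA -cQ // !mulmxA.
  have L3 : msk E1 *m X *m msk E2 = msk E1 *m A *m msk E2 + msk E1 *m d' *m msk E2.
    by rewrite /X !mulmxDr !mulmxDl mulmxN mulNmx dg_kill // oppr0 addr0.
  have -> : msk E1 *m (P *m X *m Q) *m msk E2 =
      P *m (msk E1 *m (P *m A *m Q + d') *m msk E2) *m Q.
    have L2 : msk E1 *m (P *m A *m Q + d') *m msk E2 =
        P *m (msk E1 *m A *m msk E2) *m Q + msk E1 *m d' *m msk E2.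
      by rewrite mulmxDr mulmxDl com.
    by rewrite com L3 L2 !mulmxDr !mulmxDl sandw.
  exact: leq_trans (mxrankM_maxl _ _) (mxrankM_maxr _ _).
split.
- set Y := A - dg A.
  have h1 := alg1 P Q Y d'.
  have eE : dg A + P *m X *m Q - A =
      - ((1%:M - P) *m Y + P *m (Y *m (1%:M - Q) - d' *m Q)).
    rewrite h1 -(zid (dg A) Y (P *m Y *m Q) (P *m d' *m Q)) /Y subrK /X.
    by rewrite mulmxDr mulmxDl.
  rewrite eE; apply: bndN => x.
  have rs : bnd ((1%:M - P) *m Y) (N%:R * e^+2).
    by apply: rowsum lpP _ => j; case: (hPi j).
  have cs : bnd (Y *m (1%:M - Q)) (N%:R * e^+2).
    have cs0 : bnd ((1%:M - Q) *m (A^t* - dg (A^t*))) (N%:R * e^+2).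
      by apply: rowsum lpQ _ => j; case: (hQi j).
    have E1 : (dg (A^t*))^t* = dg A by rewrite -(dg_hc A) (hcK (dg A)).
    have E2 : ((1%:M - Q) *m (A^t* - dg (A^t*)))^t* = Y *m (1%:M - Q).
      by rewrite hcM hcB E1 (hcK A) (proj1 (oprojC oQ)).
    by rewrite -E2; apply: bnd_hc cs0; rewrite mulr_ge0 ?ler0n.
  have Ne0 : 0 <= N%:R * e^+2 :> C by rewrite mulr_ge0 ?ler0n.
  have eX : ((1%:M - P) *m Y + P *m (Y *m (1%:M - Q) - d' *m Q)) *m x =
      (1%:M - P) *m (Y *m x) + P *m ((Y *m (1%:M - Q) - d' *m Q) *m x).
    by rewrite mulmxDl !mulmxA.
  rewrite eX (dnD_orth (Y *m x) ((Y *m (1%:M - Q) - d' *m Q) *m x) oP).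
  have r1 := rs x; rewrite -mulmxA in r1.
  apply: le_trans (lerD r1 (dn_proj_le _ oP)) _.
  have eW : (Y *m (1%:M - Q) - d' *m Q) *m x =
      (Y *m (1%:M - Q)) *m ((1%:M - Q) *m x) + (- d') *m (Q *m x).
    rewrite mulmxBl mulNmx !mulmxA -(mulmxA Y (1%:M - Q) (1%:M - Q)).
    by rewrite (proj2 (oprojC oQ)).
  rewrite eW.
  have h2 := dnD_le Ne0 c0 (dn_ge0 ((1%:M - Q) *m x)) (dn_ge0 (Q *m x))
     (cs ((1%:M - Q) *m x)) (bndN hd' (Q *m x)).
  rewrite -(dn_proj x oQ) in h2.
  apply: le_trans (lerD (lexx _) h2) _.
  by rewrite -mulrDl lexx.
- move=> D hD; rewrite eF; have cD := hF D hD; have cD' := compatC cD.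
  case: (hFd' D hD); rewrite !block_rowE !block_colE => r1 r2; split.
    apply: leq_trans (rank_sub_le _ _ _) _; apply: leq_trans (gen _ _ cD cD' _) _.
      by rewrite setICr.
    exact: leq_trans (rank_msk_le _ _ _) r1.
  apply: leq_trans (rank_sub_le _ _ _) _; apply: leq_trans (gen _ _ cD' cD _) _.
    by rewrite setIC setICr.
  exact: leq_trans (rank_msk_le _ _ _) r2.
move=> j; rewrite eF block_rowE block_colE; have [_ rkP _ _ _] := hPi j.
have [_ rkQ _ _ _] := hQi j.
split; apply: leq_trans (rank_sub_le _ _ _) _.
  rewrite mulmxDr mulmxDl (dg_kill _ (compat_leaf j) (setICr _)) add0r !mulmxA lp_mskl //.
  exact: leq_trans (mxrankM_maxl _ _) (leq_trans (mxrankM_maxl _ _) (leq_trans (mxrankM_maxl _ _) rkP)).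
have e1 : ~: c j :&: c j = set0 by rewrite setIC setICr.
rewrite mulmxDr mulmxDl (dg_kill _ (compatC (compat_leaf j)) e1).
rewrite add0r -!mulmxA lp_mskr //.
exact: leq_trans (mxrankM_maxr _ _) (leq_trans (mxrankM_maxr _ _) (leq_trans (mxrankM_maxr _ _) rkQ)).
Qed.
End Step.
Section Clusters.
Variables (n p : nat) (s : seq nat).
Variable hs : cluster_partition n p s.
Local Open Scope nat_scope.

Local Notation off := (leaf_offset s).

Lemma off_mono m m' : (m <= m')%N -> (off m <= off m')%N.
Proof.
move=> h; rewrite /leaf_offset -(subnKC h) takeD sumn_cat; exact: leq_addr.
Qed.

Lemma off_big m : (2 ^ p <= m)%N -> off m = n.
Proof.
case: hs => hsz _ hsum h; rewrite /leaf_offset take_oversize // hsz //.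
Qed.

Lemma off0 : off 0 = 0%N.
Proof. by rewrite /leaf_offset take0. Qed.

Lemma ex_leaf (x : 'I_n) : exists m, (x < off m.+1)%N.
Proof. by exists (2 ^ p); rewrite off_big // ltn_ord. Qed.

Definition jx (x : 'I_n) := ex_minn (ex_leaf x).

Lemma jx_spec (x : 'I_n) : [/\ (x < off (jx x).+1)%N, (off (jx x) <= x)%N & (jx x < 2 ^ p)%N].
Proof.
rewrite /jx; case: ex_minnP => m hm hmin; split => //.
- case: m hm hmin => [|m] hm hmin; first by rewrite off0.
  by rewrite leqNgt; apply/negP => /hmin; rewrite ltnn.
- have := hmin (2 ^ p).-1; rewrite prednK ?expn_gt0 // off_big // ltn_ord => /(_ isT).
  by rewrite -ltnS prednK ?expn_gt0.
Qed.

Lemma off_le_jx (x : 'I_n) m : (off m <= x)%N = (m <= jx x)%N.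
Proof.
have [h1 h2 _] := jx_spec x.
apply/idP/idP => h.
  rewrite leqNgt; apply/negP => hlt.
  by have := leq_trans (leq_trans h1 (off_mono hlt)) h; rewrite ltnn.
exact: leq_trans (off_mono h) h2.
Qed.

Lemma lt_off_jx (x : 'I_n) m : (x < off m)%N = (jx x < m)%N.
Proof. by rewrite ltnNge off_le_jx -ltnNge. Qed.

Definition cl l (x : 'I_n) := (jx x %/ 2 ^ (p - l))%N.

Lemma mem_cluster l i (x : 'I_n) : (x \in cluster n p s l i) = (cl l x == i).
Proof.
rewrite inE off_le_jx lt_off_jx /cl.
have d0 : (0 < 2 ^ (p - l))%N by rewrite expn_gt0.
rewrite eqn_leq (leq_divRL _ _ d0) -[(jx x %/ _ <= i)]ltnS (ltn_divLR _ _ d0) andbC //.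
Qed.

Lemma cl_lt l (x : 'I_n) : (l <= p)%N -> (cl l x < 2 ^ l)%N.
Proof.
move=> hl; rewrite /cl ltn_divLR ?expn_gt0 // -expnD subnKC //.
by case: (jx_spec x).
Qed.

Lemma cl_mono l q (x y : 'I_n) : (l <= q)%N -> (q <= p)%N -> cl q x = cl q y -> cl l x = cl l y.
Proof.
move=> hlq hqp; rewrite /cl.
have -> : (p - l = (p - q) + (q - l))%N by lia.
by rewrite expnD !divnMA => ->.
Qed.

End Clusters.
Definition Fam n p s q (S : {set 'I_n}) :=
  exists l i, [/\ (1 <= l <= q)%N, (i < 2 ^ l)%N & S = cluster n p s l i].
Arguments Fam : clear implicits.

Lemma nat_id q : (2 ^ q.+1 + (2 ^ q.+1 + (2 ^ (q + 2) - 4)) = 2 ^ (q.+1 + 2) - 4)%N.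
Proof. have := expn_gt0 2 q; rewrite !expnD !expnS; lia. Qed.

Lemma claim (C : numClosedFieldType) n p s k (e : C) (hs : cluster_partition n p s) :
  0 <= e -> forall q, (q <= p)%N -> forall A : 'M[C]_n, fam_eps (Fam n p s q) k e A ->
  exists d, bnd d ((2 ^ (q + 2) - 4)%N%:R * e ^+ 2) /\ fam_rk (Fam n p s q) k (A + d).
Proof.
move=> e0; elim=> [|q IH] hq A hA.
  exists 0; split; first by apply: bnd0; rewrite mulr_ge0 ?ler0n ?exprn_ge0.
  by move=> S [l [i [/andP [h1 h2] _ _]]]; have := leq_trans h1 h2.
have hq' : (q <= p)%N by lia.
pose c (j : 'I_(2 ^ q.+1)) := cluster n p s q.+1 j.
pose lf (x : 'I_n) : 'I_(2 ^ q.+1) := Ordinal (cl_lt hs x hq).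
have hlf : forall x j, (x \in c j) = (lf x == j).
  by move=> x j; rewrite /c mem_cluster -val_eqE.
have c0 : 0 <= (2 ^ (q + 2) - 4)%N%:R * e ^+ 2 by rewrite mulr_ge0 ?ler0n ?exprn_ge0.
have compF : forall D, Fam n p s q D -> compat lf D.
  move=> D [l [i [/andP [h1 h2] _ ->]]] x y hxy.
  rewrite !mem_cluster; congr (_ == _); apply: (cl_mono (q := q.+1)) => //.
  - by apply: leq_trans h2 _.
  - by move/(congr1 val): hxy.
have hAF : fam_eps (Fam n p s q) k e A.
  move=> S [l [i [/andP [h1 h2] hi ->]]]; apply: hA; exists l, i; split => //.
  by rewrite h1 /=; apply: leq_trans h2 _.
have hL : forall j, eps_rank_le (block_row A (c j)) k e /\ eps_rank_le (block_col A (c j)) k e.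
  by move=> j; apply: hA; exists q.+1, j; split; [rewrite leqnn | exact: ltn_ord | by []].
have [d [hb hrk hlv]] := step hlf e0 c0 compF (IH hq') hAF hL.
exists d; split.
  apply: bnd_le hb; rewrite -!mulrDl -!natrD nat_id //.
move=> S [l [i [/andP [h1 h2] hi ->]]].
case: (leqP l q) => hlq.
  by apply: hrk; exists l, i; split => //; rewrite h1.
have el : l = q.+1 by apply/eqP; rewrite eqn_leq h2 hlq.
subst l; exact: (hlv (Ordinal hi)).
Qed.

Theorem theorem3 (C : numClosedFieldType) (n p k : nat) (s : seq nat)
  (eps : C) (A : 'M[C]_n) :
  cluster_partition n p s -> 0 <= eps ->
  @is_eps_HSS C n p s k eps A ->
  exists dA : 'M[C]_n,
    spec_norm_le dA (sqrtC ((2 ^ (p + 2) - 4)%N)%:R * eps) /\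
    @is_HSS C n p s k (A + dA).
Proof.
move=> hs e0 hA.
have hF : fam_eps (Fam n p s p) k eps A.
  by move=> S [l [i [hl hi ->]]]; exact: hA.
have [dA [hb hrk]] := claim hs e0 (leqnn p) hF.
exists dA; split.
  apply/spec_bnd; split; first by rewrite mulr_ge0 ?sqrtC_ge0 ?ler0n.
  by rewrite exprMn sqrtCK.
by move=> l i hl hi; apply: hrk; exists l, i.
Qed.
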